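(* Let $\mu$ be a singular cardinal with $\operatorname{cf}(\mu)=\theta$, and suppose $\mathfrak{d}^*_\mu=\kappa$. Then $\mathfrak{d}_\mu=\kappa$.
   Context: For $f,g\in{}^\mu\mu$, $f\le^* g$ means $|\{\beta<\mu:f(\beta)>g(\beta)\}|<\mu$ (size less than $\mu$, not merely bounded), and $\mathfrak{d}_\mu$ is the minimal cardinality of a family $\mathcal{D}\subseteq{}^\mu\mu$ such that every $f\in{}^\mu\mu$ is $\le^*$ some member of $\mathcal{D}$. For $f,g\in{}^\mu\theta$, $f<^* g$ means $|\{\beta<\mu:f(\beta)\ge g(\beta)\}|<\mu$, and $\mathfrak{d}^*_\mu$ is the minimal cardinality of a family $\mathcal{D}\subseteq{}^\mu\theta$ such that every $f\in{}^\mu\theta$ is $<^*$ some member of $\mathcal{D}$. *)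

(* Defs.v *)
(* Cardinals are modelled as types (cardinality = the type up to
   bijection); the cardinals mu and theta are modelled as well-ordered types that
   are initial ordinals (the von Neumann cardinal as an ordinal). *)
From Stdlib Require Import Classical.

Definition injective {A B : Type} (f : A -> B) : Prop :=
  forall x y, f x = f y -> x = y.

Definition card_le (A B : Type) : Prop := exists f : A -> B, injective f.

Definition card_eq (A B : Type) : Prop :=
  exists (f : A -> B) (g : B -> A),
    (forall x, g (f x) = x) /\ (forall y, f (g y) = y).

Definition well_order {A : Type} (lt : A -> A -> Prop) : Prop :=
  well_founded lt /\
  (forall x, ~ lt x x) /\
  (forall x y z, lt x y -> lt y z -> lt x z) /\
  (forall x y, lt x y \/ x = y \/ lt y x).

Definition leo {A : Type} (lt : A -> A -> Prop) (x y : A) : Prop := lt x y \/ x = y.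

Definition is_cardinal {A : Type} (lt : A -> A -> Prop) : Prop :=
  well_order lt /\ forall a : A, ~ card_le A {x : A | lt x a}.

Definition cofinal {M : Type} (lt : M -> M -> Prop) (X : M -> Prop) : Prop :=
  forall m, exists x, X x /\ leo lt m x.

Definition cof_is {M : Type} (lt : M -> M -> Prop) (T : Type) : Prop :=
  (exists X, cofinal lt X /\ card_eq {x : M | X x} T) /\
  (forall X, cofinal lt X -> card_le T {x : M | X x}).

Definition singular_with_cof {M : Type} (lt : M -> M -> Prop) (T : Type) : Prop :=
  card_le nat M /\ cof_is lt T /\ card_le T M /\ ~ card_le M T.

Definition small {M : Type} (A : M -> Prop) : Prop := ~ card_le M {b : M | A b}.

Definition le_star {M : Type} (ltM : M -> M -> Prop) (f g : M -> M) : Prop :=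
  small (fun b => ltM (g b) (f b)).

Definition lt_star {M T : Type} (ltT : T -> T -> Prop) (f g : M -> T) : Prop :=
  small (fun b : M => leo ltT (g b) (f b)).

Definition dominating_mu {M : Type} (ltM : M -> M -> Prop) (D : (M -> M) -> Prop) : Prop :=
  forall f : M -> M, exists g, D g /\ le_star ltM f g.

Definition dominating_star {M T : Type} (ltT : T -> T -> Prop) (D : (M -> T) -> Prop) : Prop :=
  forall f : M -> T, exists g, D g /\ lt_star ltT f g.

Definition min_card_is {F : Type} (P : (F -> Prop) -> Prop) (K : Type) : Prop :=
  (exists D, P D /\ card_eq {x : F | D x} K) /\
  (forall D, P D -> card_le K {x : F | D x}).

Definition d_mu_is {M : Type} (ltM : M -> M -> Prop) (K : Type) : Prop :=
  min_card_is (dominating_mu ltM) K.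

Definition d_star_is {M T : Type} (ltT : T -> T -> Prop) (K : Type) : Prop :=
  min_card_is (F := M -> T) (dominating_star ltT) K.

(* Main.v *)
Require Import Defs.
From Stdlib Require Import Classical ClassicalEpsilon ProofIrrelevance.

Lemma sig_eq {A} (P : A -> Prop) (x y : {a | P a}) : proj1_sig x = proj1_sig y -> x = y.
Proof. destruct x as [x Hx], y as [y Hy]; simpl; intros ->; f_equal; apply proof_irrelevance. Qed.

Lemma card_le_trans A B C : card_le A B -> card_le B C -> card_le A C.
Proof. intros [f Hf] [g Hg]. exists (fun x => g (f x)). intros x y H. apply Hf, Hg, H. Qed.

Lemma choice_fun {A B} (R : A -> B -> Prop) : (forall a, exists b, R a b) -> exists f, forall a, R a (f a).
Proof. intros H. exists (fun a => proj1_sig (constructive_indefinite_description _ (H a))).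
  intro a. exact (proj2_sig (constructive_indefinite_description _ (H a))). Qed.

Lemma image_le {A B} (P : A -> Prop) (F : A -> B) :
  card_le {y | exists x, P x /\ y = F x} {x | P x}.
Proof.
  exists (fun y => exist P (proj1_sig (constructive_indefinite_description _ (proj2_sig y)))
     (proj1 (proj2_sig (constructive_indefinite_description _ (proj2_sig y))))).
  intros y1 y2 E. apply (f_equal (@proj1_sig _ _)) in E. simpl in E. apply sig_eq.
  pose proof (proj2_sig (constructive_indefinite_description _ (proj2_sig y1))) as [_ H1].
  pose proof (proj2_sig (constructive_indefinite_description _ (proj2_sig y2))) as [_ H2].
  rewrite H1, H2, E. reflexivity.
Qed.

Definition csb_C {A B} (f:A->B) (g:B->A) (a:A) : Prop :=
  exists n a0, (~ exists b, g b = a0) /\ a = Nat.iter n (fun x => g (f x)) a0.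

Lemma csb_notC {A B} (f:A->B) (g:B->A) a : ~ csb_C f g a -> exists b, g b = a.
Proof. intros H. apply NNPP. intros H1. apply H. exists 0, a. split; auto. Qed.

Definition csb_h {A B} (f:A->B) (g:B->A) (a:A) : B :=
  match excluded_middle_informative (csb_C f g a) with
  | left _ => f a
  | right nC => proj1_sig (constructive_indefinite_description _ (csb_notC f g a nC))
  end.

Lemma csb_h_C {A B} f g (a:A) : csb_C f g a -> @csb_h A B f g a = f a.
Proof. intros H. unfold csb_h. destruct (excluded_middle_informative _); [reflexivity|contradiction]. Qed.

Lemma csb_h_nC {A B} f g (a:A) : ~ csb_C f g a -> g (@csb_h A B f g a) = a.
Proof. intros H. unfold csb_h. destruct (excluded_middle_informative _) as [c|c]; [contradiction|].
 destruct (constructive_indefinite_description _ _) as [b Hb]. exact Hb. Qed.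

Lemma csb A B : card_le A B -> card_le B A -> card_eq A B.
Proof.
  intros [f Hf] [g Hg].
  assert (Hinj : forall x y, csb_h f g x = csb_h f g y -> x = y).
  { intros x y Hxy.
    destruct (classic (csb_C f g x)) as [Cx|Cx]; destruct (classic (csb_C f g y)) as [Cy|Cy].
    - rewrite (csb_h_C _ _ _ Cx), (csb_h_C _ _ _ Cy) in Hxy. apply Hf, Hxy.
    - exfalso. apply Cy.
      assert (Hy : y = g (f x)).
      { rewrite <- (csb_h_nC f g y Cy). rewrite <- Hxy. rewrite (csb_h_C f g x Cx). reflexivity. }
      destruct Cx as [n [a0 [Ha0 Hx]]]. exists (S n), a0. split; auto. rewrite Hy, Hx. reflexivity.
    - exfalso. apply Cx.
      assert (Hx : x = g (f y)).
      { rewrite <- (csb_h_nC f g x Cx). rewrite Hxy. rewrite (csb_h_C f g y Cy). reflexivity. }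
      destruct Cy as [n [a0 [Ha0 Hy]]]. exists (S n), a0. split; auto. rewrite Hx, Hy. reflexivity.
    - rewrite <- (csb_h_nC f g x Cx), <- (csb_h_nC f g y Cy), Hxy. reflexivity. }
  assert (Hsurj : forall b, exists a, csb_h f g a = b).
  { intros b. destruct (classic (csb_C f g (g b))) as [C|C].
    - pose proof C as [n [a0 [Ha0 Hb]]]. destruct n as [|n].
      + exfalso. apply Ha0. exists b. exact Hb.
      + simpl in Hb. apply Hg in Hb.
        exists (Nat.iter n (fun x => g (f x)) a0). rewrite csb_h_C. auto.
        exists n, a0. auto.
    - exists (g b). apply Hg. apply csb_h_nC; auto. }
  exists (csb_h f g), (fun b => proj1_sig (constructive_indefinite_description _ (Hsurj b))).
  split.
  - intros x. apply Hinj.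
    exact (proj2_sig (constructive_indefinite_description _ (Hsurj (csb_h f g x)))).
  - intros y. exact (proj2_sig (constructive_indefinite_description _ (Hsurj y))).
Qed.

Lemma small_sub {M} (A B : M -> Prop) : (forall b, A b -> B b) -> small B -> small A.
Proof.
  intros H HB [f Hf]. apply HB.
  exists (fun m => exist B (proj1_sig (f m)) (H _ (proj2_sig (f m)))).
  intros x y E. apply Hf. apply sig_eq. apply (f_equal (@proj1_sig _ _)) in E. exact E.
Qed.

Lemma least_elt {A} (R : A -> A -> Prop) (P : A -> Prop) a :
  well_founded R -> P a -> exists m, P m /\ forall y, R y m -> ~ P y.
Proof.
  intros W Pa. apply NNPP. intro H. revert Pa.
  induction a as [a IH] using (well_founded_ind W). intros Pa. apply H.
  exists a. split; [exact Pa|]. intros y Ry Py. exact (IH y Ry Py).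
Qed.

Definition shift {M} (a : nat -> M) (y : M) : M :=
  match excluded_middle_informative (exists n, y = a n) with
  | left H => a (S (proj1_sig (constructive_indefinite_description _ H)))
  | right _ => y
  end.

Lemma shift_spec {M} (a : nat -> M) y : injective a ->
  (exists n, y = a n /\ shift a y = a (S n)) \/ ((~ exists n, y = a n) /\ shift a y = y).
Proof.
  intros Ha. unfold shift. destruct (excluded_middle_informative _) as [H|H].
  - left. destruct (constructive_indefinite_description _ H) as [n Hn]. simpl. exists n. auto.
  - right. auto.
Qed.

Lemma shift_inj {M} (a : nat -> M) : injective a -> injective (shift a).
Proof.
  intros Ha x y E.
  destruct (shift_spec a x Ha) as [[n [Hx Ex]]|[Nx Ex]];
  destruct (shift_spec a y Ha) as [[m [Hy Ey]]|[Ny Ey]]; rewrite Ex, Ey in E.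
  - apply Ha in E. injection E as ->. subst. reflexivity.
  - exfalso. apply Ny. exists (S n). auto.
  - exfalso. apply Nx. exists (S m). auto.
  - exact E.
Qed.

Lemma shift_not0 {M} (a : nat -> M) y : injective a -> shift a y <> a 0.
Proof.
  intros Ha E. destruct (shift_spec a y Ha) as [[n [Hy Ey]]|[Ny Ey]]; rewrite Ey in E.
  - apply Ha in E. discriminate.
  - apply Ny. exists 0. auto.
Qed.

Lemma avoid_point {M} (x : M) : card_le nat M -> card_le M {y | y <> x}.
Proof.
  intros [a Ha].
  destruct (classic (exists k, x = a k)) as [[k Hk]|Nk].
  - set (b := fun n => a (n + k)).
    assert (Hb : injective b).
    { intros n m E. apply Ha in E. unfold b in E. revert E. clear. induction k; intros E.
      - rewrite !PeanoNat.Nat.add_0_r in E. exact E.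
      - rewrite <- !plus_n_Sm in E. injection E as E. auto. }
    exists (fun y => exist (fun z => z <> x) (shift b y) (ltac:(rewrite Hk; apply (shift_not0 b y Hb)))).
    intros y z E. apply (f_equal (@proj1_sig _ _)) in E. simpl in E. exact (shift_inj b Hb _ _ E).
  - assert (Hne : forall y, (if excluded_middle_informative (y = x) then a 0 else shift a y) <> x).
    { intros y. destruct (excluded_middle_informative (y = x)) as [E|E].
      - intro H. apply Nk. exists 0. auto.
      - destruct (shift_spec a y Ha) as [[n [Hy Ey]]|[Ny Ey]]; rewrite Ey; auto.
        intro H. apply Nk. exists (S n). auto. }
    exists (fun y => exist (fun z => z <> x) _ (Hne y)).
    intros y z E. apply (f_equal (@proj1_sig _ _)) in E. simpl in E.
    destruct (excluded_middle_informative (y = x)) as [Ey|Ey];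
    destruct (excluded_middle_informative (z = x)) as [Ez|Ez].
    + congruence.
    + exfalso. symmetry in E. exact (shift_not0 a z Ha E).
    + exfalso. exact (shift_not0 a y Ha E).
    + exact (shift_inj a Ha _ _ E).
Qed.

Lemma no_max {M} (ltM : M -> M -> Prop) : is_cardinal ltM -> card_le nat M ->
  forall x, exists y, ltM x y.
Proof.
  intros [[W [Irr [Tr Tri]]] HC] Hn x. apply NNPP. intro H.
  apply (HC x). eapply card_le_trans. apply (avoid_point x Hn).
  exists (fun y : {z | z <> x} => exist (fun z => ltM z x) (proj1_sig y)
     (match Tri (proj1_sig y) x with
      | or_introl h => h
      | or_intror (or_introl e) => False_ind _ (proj2_sig y e)
      | or_intror (or_intror h) => False_ind _ (H (ex_intro _ _ h)) end)).
  intros y z E. apply (f_equal (@proj1_sig _ _)) in E. simpl in E. apply sig_eq. exact E.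
Qed.

Lemma lt_leo_trans {A} (lt : A -> A -> Prop) x y z :
  (forall x y z, lt x y -> lt y z -> lt x z) -> lt x y -> leo lt y z -> lt x z.
Proof. intros Tr H [H2| <-]; eauto. Qed.

Lemma leo_lt_trans {A} (lt : A -> A -> Prop) x y z :
  (forall x y z, lt x y -> lt y z -> lt x z) -> leo lt x y -> lt y z -> lt x z.
Proof. intros Tr [H| ->] H2; eauto. Qed.

Lemma nu_exists M (ltM : M -> M -> Prop) T (ltT : T -> T -> Prop) :
  is_cardinal ltM -> is_cardinal ltT -> singular_with_cof ltM T ->
  exists nu : T -> M, (forall i k, leo ltT i k -> leo ltM (nu i) (nu k)) /\
                      (forall x, exists i, ltM x (nu i)).
Proof.
  intros HM HT [Hnat [[[X [HX [p [q [Hpq Hqp]]]]] Hcof] _]].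
  pose proof (no_max ltM HM Hnat) as NM.
  destruct HM as [[W [Irr [Tr Tri]]] _].
  destruct HT as [[WT [IrrT [TrT TriT]]] HCT].
  set (e := fun i => proj1_sig (q i)).
  assert (He : forall m, exists i, leo ltM m (e i)).
  { intros m. destruct (HX m) as [x [Xx Hx]]. exists (p (exist _ x Xx)).
    unfold e. rewrite Hpq. exact Hx. }
  assert (Hbd : forall i, exists m0, forall j, ltT j i -> ltM (e j) m0).
  { intros i. apply NNPP. intro H.
    set (Y := fun y => exists j, ltT j i /\ y = e j).
    assert (HY : cofinal ltM Y).
    { intros m. apply NNPP. intro Hm. apply H. exists m. intros j Hj.
      destruct (Tri (e j) m) as [h|[h|h]]; auto; exfalso; apply Hm; exists (e j);
      (split; [exists j; auto|]); unfold leo; auto. }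
    apply (HCT i). eapply card_le_trans. apply (Hcof Y HY). apply image_le. }
  set (P := fun i m => (forall j, ltT j i -> ltM (e j) m) /\ leo ltM (e i) m).
  assert (Hex : forall i, exists m, P i m /\ forall y, ltM y m -> ~ P i y).
  { intros i. destruct (Hbd i) as [m0 Hm0].
    destruct (Tri m0 (e i)) as [h|[h|h]].
    - apply (least_elt ltM (P i) (e i) W). split; [|right; auto].
      intros j Hj. eauto.
    - apply (least_elt ltM (P i) m0 W). split; [auto|right; auto].
    - apply (least_elt ltM (P i) m0 W). split; [auto|left; auto]. }
  destruct (choice_fun _ Hex) as [nu Hnu].
  exists nu. split.
  - intros i k [Hik| <-]; [|right; reflexivity].
    assert (Pk : P i (nu k)).
    { destruct (Hnu k) as [[H1 H2] _]. split.
      - intros j Hj. apply H1. eauto.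
      - left. apply H1. auto. }
    destruct (Tri (nu i) (nu k)) as [h|[h|h]].
    + left; auto.
    + right; auto.
    + exfalso. exact (proj2 (Hnu i) _ h Pk).
  - intros x. destruct (NM x) as [y Hy]. destruct (He y) as [i Hi]. exists i.
    apply (lt_leo_trans ltM x y _ Tr Hy).
    destruct (Hnu i) as [[_ H2] _].
    destruct Hi as [Hi| ->]; [|exact H2].
    left. exact (lt_leo_trans ltM _ _ _ Tr Hi H2).
Qed.

Theorem lemma3p1 (M : Type) (ltM : M -> M -> Prop) (T : Type) (ltT : T -> T -> Prop)
  (K : Type) :
  is_cardinal ltM -> is_cardinal ltT -> singular_with_cof ltM T ->
  d_star_is (M := M) ltT K -> d_mu_is ltM K.
Proof.
  intros HM HT Hs [[Ds [HDs HeqDs]] Hmin].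
  destruct (nu_exists M ltM T ltT HM HT Hs) as [nu [Hmono Hunb]].
  destruct (choice_fun _ Hunb) as [c Hc].
  destruct HM as [[W [Irr [Tr Tri]]] _].
  destruct HT as [[WT [IrrT [TrT TriT]]] _].
  assert (lower : forall D, dominating_mu ltM D -> card_le K {x | D x}).
  { intros D HD.
    set (E := fun h : M -> T => exists g, D g /\ h = (fun b => c (g b))).
    assert (HE : dominating_star (M := M) ltT E).
    { intro h. destruct (HD (fun b => nu (h b))) as [g [Dg Hle]].
      exists (fun b => c (g b)). split. exists g; auto.
      unfold lt_star. eapply small_sub; [|exact Hle]. simpl.
      intros b Hb. apply (lt_leo_trans ltM _ (nu (c (g b))) _ Tr); auto. }
    apply card_le_trans with {x | E x}. apply Hmin; auto. apply image_le. }
  set (D' := fun f : M -> M => exists g, Ds g /\ f = (fun b => nu (g b))).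
  assert (HD' : dominating_mu ltM D').
  { intro f. destruct (HDs (fun b => c (f b))) as [g [Dg Hlt]].
    exists (fun b => nu (g b)). split. exists g; auto.
    unfold le_star. eapply small_sub; [|exact Hlt]. simpl.
    intros b Hb. destruct (TriT (g b) (c (f b))) as [h|[h|h]].
    - left; auto.
    - right; auto.
    - exfalso. apply (Irr (f b)).
      apply (lt_leo_trans ltM _ (nu (c (f b))) _ Tr (Hc (f b))).
      left. apply (leo_lt_trans ltM _ (nu (g b)) _ Tr); auto.
      apply Hmono. left; auto. }
  split; [|exact lower].
  exists D'. split; [exact HD'|].
  apply csb.
  - apply card_le_trans with {x | Ds x}. apply image_le.
    destruct HeqDs as [p [q [H1 H2]]]. exists p. intros x y E.
    rewrite <- (H1 x), <- (H1 y), E. reflexivity.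
  - apply lower. exact HD'.
Qed.
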